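(* For any $X\in\mathcal C^\infty\mathrm{Sch}$ there is a morphism of presheaves $N_{\mathrm{alg}}(\Delta_X)\to N_\infty(\Delta_X)$ commuting with the canonical morphisms of both to $h_X\times h_X$.
   Context: A $C^\infty$-ring is a product-preserving functor from the category of $\mathbb R^n$ ($n\ge0$) and smooth maps to sets; $\mathcal C^\infty\mathrm{Sch}$ is the opposite category, $X=\mathrm{Spec}(C^\infty(X))$, $C^\infty(X\times X)=C^\infty(X)\otimes_\infty C^\infty(X)$; ideals are ideals of the underlying $\mathbb R$-algebra; $A\{a^{-1}\}$ is the universal $C^\infty$-ring inverting $a$; $\sqrt I$ is the nilradical and $\sqrt[\infty]{I}:=\{f\mid (A/I)\{f^{-1}\}\cong0\}$. $I_\Delta$ is the kernel of the codiagonal $C^\infty(X\times X)\to C^\infty(X)$. Presheaves are functors from $C^\infty$-rings to sets; $h_Y=\mathrm{Hom}(C^\infty(Y),-)$. $N_{\mathrm{alg}}(\Delta_X):=\mathrm{colim}\,\mathrm{Hom}(C^\infty(X\times X)/I,-)$ over ideals $I$ with $\sqrt I=\sqrt{I_\Delta}$, and $N_\infty(\Delta_X)$ the same over ideals with $\sqrt[\infty] I=\sqrt[\infty]{I_\Delta}$ (diagrams given by quotient maps); the canonical maps to $h_X\times h_X=h_{X\times X}$ are induced by the quotients $C^\infty(X\times X)\to C^\infty(X\times X)/I$. *)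

(* Defs.v *)
From HB Require Import structures.

From mathcomp Require Import all_boot all_order all_algebra.
From mathcomp Require Import boolp classical_sets functions topology normedtype
  derive matrix_normedtype.
From mathcomp Require Import Rstruct Rstruct_topology.
From Stdlib Require Import Rdefinitions Relation_Operators.

Set Implicit Arguments.
Unset Strict Implicit.
Unset Printing Implicit Defensive.
Import Order.TTheory GRing.Theory Num.Theory.
Local Open Scope ring_scope.

Notation RR := Rdefinitions.R.

Notation Rn n := 'rV[RR]_n.

Definition ebasis (n : nat) (i : 'I_n) : Rn n := delta_mx 0 i.

Definition pd (n : nat) (i : 'I_n) (f : Rn n -> RR^o) : Rn n -> RR^o :=
  fun x => 'D_(ebasis i) f x.

Fixpoint iterpd (n : nat) (l : seq 'I_n) (f : Rn n -> RR^o) : Rn n -> RR^o :=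
  match l with
  | [::] => f
  | i :: l' => pd i (iterpd l' f)
  end.

Definition smooth_fun (n : nat) (f : Rn n -> RR^o) : Prop :=
  forall l : seq 'I_n,
    continuous (iterpd l f) /\
    forall (i : 'I_n) (x : Rn n), derivable (iterpd l f) x (ebasis i).

Definition smooth (n m : nat) (g : Rn n -> Rn m) : Prop :=
  forall j : 'I_m, smooth_fun (fun x => g x 0 j : RR^o).

Definition smap (n m : nat) := {g : Rn n -> Rn m | smooth g}.

Inductive polyf (n : nat) : (Rn n -> RR^o) -> Prop :=
| polyf_cst (c : RR) : polyf (fun _ => c)
| polyf_coord (i : 'I_n) : polyf (fun v => v 0 i)
| polyf_add f g : polyf f -> polyf g -> polyf (fun v => f v + g v)
| polyf_mul f g : polyf f -> polyf g -> polyf (fun v => f v * g v).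

Lemma coord_is_derive (n : nat) (i : 'I_n) (x v : Rn n) :
  is_derive x v (fun w : Rn n => w 0 i : RR^o) (v 0 i : RR^o).
Proof.
have @f : {linear 'M[RR]_(1, n) -> RR^o}.
  by exists (fun N : 'M[RR]_(_, _) => N 0 i); do 2![eexists]; do ?[constructor];
     rewrite ?mxE// => ? *; rewrite ?mxE//; move=> ?; rewrite !mxE.
have fc : continuous f by exact: coord_continuous.
have -> : (fun w : Rn n => w 0 i : RR^o) = f by [].
apply: DeriveDef; first exact/diff_derivable/linear_differentiable.
by rewrite deriveE ?diff_lin //; exact: linear_differentiable.
Qed.

Lemma polyf_der n f (Pf : @polyf n f) (x v : Rn n) : derivable f x v.
Proof.
elim: Pf x v => [c|i|f1 g1 _ IHf _ IHg|f1 g1 _ IHf _ IHg] x v.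
- exact: derivable_cst.
- by have [] := coord_is_derive i x v.
- exact: (derivableD (IHf x v) (IHg x v)).
- exact: (derivableM (IHf x v) (IHg x v)).
Qed.

Arguments polyf_der [n f] Pf x v.

Lemma polyf_cont n f : @polyf n f -> continuous f.
Proof.
elim=> [c|i|f1 g1 _ IHf _ IHg|f1 g1 _ IHf _ IHg] x.
- exact: cst_continuous.
- exact: coord_continuous.
- exact: (continuousD (IHf x) (IHg x)).
- exact: (continuousM (IHf x) (IHg x)).
Qed.

Lemma polyf_pd n f : @polyf n f -> forall i, polyf (pd i f).
Proof.
elim=> [c|j|f1 g1 Pf IHf Pg IHg|f1 g1 Pf IHf Pg IHg] i.
- have -> : pd i (fun _ : Rn n => c) = (fun _ => 0).
    by apply/funext => x; rewrite /pd derive_cst.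
  exact: polyf_cst.
- have -> : pd i (fun w : Rn n => w 0 j) = (fun _ => ebasis i 0 j).
    by apply/funext => x; rewrite /pd; have [_ ->] := coord_is_derive j x (ebasis i).
  exact: polyf_cst.
- have -> : pd i (fun v => f1 v + g1 v) = (fun v => pd i f1 v + pd i g1 v).
    apply/funext => x; rewrite /pd.
    by rewrite (deriveD (polyf_der Pf x _) (polyf_der Pg x _)).
  exact: polyf_add.
- have -> : pd i (fun v => f1 v * g1 v) =
            (fun v => f1 v * pd i g1 v + g1 v * pd i f1 v).
    apply/funext => x; rewrite /pd.
    by rewrite (deriveM (polyf_der Pf x _) (polyf_der Pg x _)).
  by apply: polyf_add; apply: polyf_mul.
Qed.

Lemma polyf_smooth n f : @polyf n f -> smooth_fun f.
Proof.
move=> Pf l.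
have Pl : polyf (iterpd l f) by elim: l => //= i l IH; exact: polyf_pd.
by split; [exact: polyf_cont | move=> i x; exact: polyf_der].
Qed.

Lemma smooth_row n (g : Rn n -> RR^o) : polyf g ->
  smooth (fun v => \row_(_ < 1) g v : Rn 1).
Proof.
move=> Pg j; have -> : (fun x => (\row_(_ < 1) g x : Rn 1) 0 j : RR^o) = g.
  by apply/funext => x; rewrite mxE.
exact: polyf_smooth.
Qed.

Definition i0_2 : 'I_2 := @Ordinal 2 0 isT.
Definition i1_2 : 'I_2 := @Ordinal 2 1 isT.

Definition proj (n : nat) (i : 'I_n) : smap n 1 :=
  exist _ _ (smooth_row (polyf_coord i)).
Definition cstmap (n : nat) (c : RR) : smap n 1 :=
  exist _ _ (smooth_row (@polyf_cst n c)).
Definition addmap : smap 2 1 :=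
  exist _ _ (smooth_row (polyf_add (polyf_coord i0_2) (polyf_coord i1_2))).
Definition mulmap : smap 2 1 :=
  exist _ _ (smooth_row (polyf_mul (polyf_coord i0_2) (polyf_coord i1_2))).

(* C^oo-rings: product-preserving functors from the category of the   *)
(* R^n (n >= 0) and smooth maps to sets                               *)

Record CRing := {
  cr_ob :> nat -> Type;
  cr_map : forall n m : nat, smap n m -> cr_ob n -> cr_ob m;
  cr_map_id : forall n (f : smap n n), (forall v, sval f v = v) ->
    forall x, cr_map f x = x;
  cr_map_comp : forall n m k (f : smap n m) (g : smap m k) (h : smap n k),
    (forall v, sval h v = sval g (sval f v)) ->
    forall x, cr_map h x = cr_map g (cr_map f x);
  (* product preservation: R^n = R x ... x R with projections pi_i is sent
     to a product, i.e. x |-> (F(pi_i) x)_i : F(R^n) -> F(R)^n is a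
     bijection, with inverse cr_tup *)
  cr_tup : forall n : nat, ('I_n -> cr_ob 1) -> cr_ob n;
  cr_tupK : forall n (a : 'I_n -> cr_ob 1) (i : 'I_n),
    cr_map (proj i) (cr_tup a) = a i;
  cr_projK : forall n (x : cr_ob n), cr_tup (fun i => cr_map (proj i) x) = x
}.
Arguments cr_map {c n m}.
Arguments cr_tup {c n}.

Record CHom (A B : CRing) := {
  ch :> forall n : nat, A n -> B n;
  ch_nat : forall n m (f : smap n m) (x : A n),
    ch (cr_map f x) = cr_map f (ch x)
}.
Arguments ch {A B} c n x.

Definition hid (A : CRing) : CHom A A :=
  @Build_CHom A A (fun n x => x) (fun n m f x => erefl).

Definition hcomp (A B C : CRing) (f : CHom A B) (g : CHom B C) : CHom A C.
Proof.
refine (@Build_CHom A C (fun n x => g n (f n x)) _).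
by move=> n m h x; rewrite !ch_nat.
Defined.

Definition hom_eq (A B : CRing) (f g : CHom A B) : Prop :=
  forall n (x : A n), f n x = g n x.

(* the underlying commutative R-algebra C^oo-ring A, carried by A 1    *)

Definition no_ord0 (T : Type) (i : 'I_0) : T :=
  match i with Ordinal m H => False_rect T (notF (etrans (esym (ltn0 m)) H)) end.

Definition cr_op (A : CRing) n (f : smap n 1) (a : 'I_n -> A 1) : A 1 :=
  cr_map f (cr_tup a).

Definition pair2 (T : Type) (a b : T) : 'I_2 -> T :=
  fun i => if val i == 0%N then a else b.

Definition cr_zero (A : CRing) : A 1 := cr_op (cstmap 0 0) (@no_ord0 (A 1)).
Definition cr_one (A : CRing) : A 1 := cr_op (cstmap 0 1) (@no_ord0 (A 1)).
Definition cr_add (A : CRing) (a b : A 1) : A 1 := cr_op addmap (pair2 a b).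
Definition cr_mul (A : CRing) (a b : A 1) : A 1 := cr_op mulmap (pair2 a b).
Definition cr_pow (A : CRing) (a : A 1) (k : nat) : A 1 :=
  iter k (cr_mul a) (cr_one A).

Definition set_eq (T : Type) (P Q : T -> Prop) : Prop := forall x, P x <-> Q x.
Definition subset (T : Type) (P Q : T -> Prop) : Prop := forall x, P x -> Q x.

(* ideals of the underlying R-algebra (closure under multiplication by
   constants, hence under R-scaling and negation, is included) *)
Definition is_ideal (A : CRing) (I : A 1 -> Prop) : Prop :=
  [/\ I (cr_zero A),
      forall a b, I a -> I b -> I (cr_add a b) &
      forall a b, I b -> I (cr_mul a b)].

Definition nilrad (A : CRing) (I : A 1 -> Prop) : A 1 -> Prop :=
  fun f => exists k : nat, I (cr_pow f k).

(* phi kills I, i.e. phi factors (uniquely) through A -> A/I *)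
Definition kills (A B : CRing) (phi : CHom A B) (I : A 1 -> Prop) : Prop :=
  forall a, I a -> phi 1%N a = cr_zero B.

Definition is_unit (B : CRing) (b : B 1) : Prop :=
  exists c, cr_mul b c = cr_one B.

(* sqrt^oo I = { f | (A/I){f^-1} = 0 }.  By the universal properties of
   A -> A/I and of A/I -> (A/I){f^-1}, the ring (A/I){f^-1} is the initial
   C^oo-ring under A killing I and inverting f; it is the zero ring iff
   every such C^oo-ring B is the zero ring, i.e. has 0 = 1. *)
Definition infrad (A : CRing) (I : A 1 -> Prop) : A 1 -> Prop :=
  fun f => forall (B : CRing) (psi : CHom A B),
    kills psi I -> is_unit (psi 1%N f) -> cr_zero B = cr_one B.

Definition kernel (A B : CRing) (phi : CHom A B) : A 1 -> Prop :=
  fun a => phi 1%N a = cr_zero B.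

Definition is_coproduct (X A : CRing) (i1 i2 : CHom X A) : Prop :=
  forall (B : CRing) (f g : CHom X B),
    exists h : CHom A B,
      [/\ hom_eq (hcomp i1 h) f, hom_eq (hcomp i2 h) g &
          forall h' : CHom A B, hom_eq (hcomp i1 h') f ->
            hom_eq (hcomp i2 h') g -> hom_eq h' h].

Section Colim.
Variables (Idx : Type) (le : Idx -> Idx -> Prop) (D : Idx -> Type)
  (t : forall i j, le i j -> D i -> D j).

Definition colim_gen (x y : {i : Idx & D i}) : Prop :=
  exists h : le (projT1 x) (projT1 y), projT2 y = t h (projT2 x).

Definition colim_eq : {i : Idx & D i} -> {i : Idx & D i} -> Prop :=
  clos_refl_sym_trans _ colim_gen.

(* the colimit: the quotient of the disjoint union by colim_eq,
   represented by the set of equivalence classes *)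
Definition colim : Type :=
  {P : {i : Idx & D i} -> Prop | exists x, P = colim_eq x}.

Definition colim_in (x : {i : Idx & D i}) : colim :=
  exist _ (colim_eq x) (ex_intro _ x erefl).

Definition colim_repr (c : colim) : {i : Idx & D i} :=
  proj1_sig (cid (proj2_sig c)).
End Colim.

(* the presheaves colim_{I : P I} Hom(A/I, -) on C^oo-rings            *)

(* Hom(A/I, C) = morphisms A -> C killing I *)
Definition QHom (A C : CRing) (I : A 1 -> Prop) := {phi : CHom A C | kills phi I}.

(* the index: ideals I satisfying a condition P, with an arrow J -> I when
   I is contained in J (quotient A/I -> A/J, hence Hom(A/J,-) -> Hom(A/I,-)) *)
Definition Idx (A : CRing) (P : (A 1 -> Prop) -> Prop) := {I : A 1 -> Prop | P I}.

Definition idx_le (A : CRing) (P : (A 1 -> Prop) -> Prop) (J I : Idx P) : Prop :=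
  subset (sval I) (sval J).

Definition restr (A C : CRing) (P : (A 1 -> Prop) -> Prop) (J I : Idx P)
  (h : idx_le J I) (phi : QHom C (sval J)) : QHom C (sval I) :=
  exist (fun psi : CHom A C => kills psi (sval I)) (sval phi)
    (fun a Ia => proj2_sig phi a (h a Ia)).

Definition Ncolim (A : CRing) (P : (A 1 -> Prop) -> Prop) (C : CRing) : Type :=
  @colim (Idx P) (@idx_le A P) (fun I => QHom C (sval I)) (@restr A C P).

Lemma cr0_uniq (B : CRing) (x y : B 0%N) : x = y.
Proof.
rewrite -(cr_projK x) -(cr_projK y); congr cr_tup.
by apply/funext => -[].
Qed.

Lemma hom_zero (C D : CRing) (g : CHom C D) : g 1%N (cr_zero C) = cr_zero D.
Proof.
rewrite /cr_zero /cr_op ch_nat; congr cr_map; exact: cr0_uniq.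
Qed.

Definition postcomp (A C D : CRing) (I : A 1 -> Prop) (g : CHom C D)
  (phi : QHom C I) : QHom D I.
Proof.
refine (exist _ (hcomp (sval phi) g) _).
by move=> a Ia /=; rewrite (proj2_sig phi a Ia) hom_zero.
Defined.

Definition Ncolim_map (A : CRing) (P : (A 1 -> Prop) -> Prop) (C D : CRing)
  (g : CHom C D) (c : Ncolim P C) : Ncolim P D :=
  let x := colim_repr c in
  colim_in (@restr A D P) (existT _ (projT1 x) (postcomp g (projT2 x))).

(* the canonical morphism to h_X x h_X induced by A -> A/I, where A = X (x)_oo X *)
Definition Ncolim_can (X A : CRing) (i1 i2 : CHom X A) (P : (A 1 -> Prop) -> Prop)
  (C : CRing) (c : Ncolim P C) : CHom X C * CHom X C :=
  let x := colim_repr c in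
  (hcomp i1 (sval (projT2 x)), hcomp i2 (sval (projT2 x))).

Definition P_alg (A : CRing) (IDelta : A 1 -> Prop) (I : A 1 -> Prop) : Prop :=
  is_ideal I /\ set_eq (nilrad I) (nilrad IDelta).
Definition P_inf (A : CRing) (IDelta : A 1 -> Prop) (I : A 1 -> Prop) : Prop :=
  is_ideal I /\ set_eq (infrad I) (infrad IDelta).

Definition N_alg (A : CRing) (IDelta : A 1 -> Prop) (C : CRing) : Type :=
  Ncolim (P_alg IDelta) C.
Definition N_inf (A : CRing) (IDelta : A 1 -> Prop) (C : CRing) : Type :=
  Ncolim (P_inf IDelta) C.

(* Main.v *)
From HB Require Import structures.
Require Import Defs.
From mathcomp Require Import all_boot all_order all_algebra.
From mathcomp Require Import boolp classical_sets functions topology normedtype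
  derive matrix_normedtype.
From mathcomp Require Import Rstruct Rstruct_topology.
From mathcomp Require Import ring.
From Stdlib Require Import Relation_Operators.
Set Implicit Arguments.
Unset Strict Implicit.
Unset Printing Implicit Defensive.
Import Order.TTheory GRing.Theory Num.Theory.
Local Open Scope ring_scope.



Inductive pexp (n : nat) : Type :=
| PC of RR | PV of 'I_n | PAdd of pexp n & pexp n | PMul of pexp n & pexp n.

Fixpoint pden n (p : pexp n) : Rn n -> RR^o :=
  match p with
  | PC c => fun _ => c
  | PV i => fun v => v 0 i
  | PAdd p q => fun v => pden p v + pden q v
  | PMul p q => fun v => pden p v * pden q v
  end.

Lemma pden_polyf n (p : pexp n) : polyf (pden p).
Proof.
elim: p => /= [c|i|p IHp q IHq|p IHp q IHq].
- exact: polyf_cst.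
- exact: polyf_coord.
- exact: polyf_add.
- exact: polyf_mul.
Qed.

Definition psm n (p : pexp n) : smap n 1 := exist _ _ (smooth_row (pden_polyf p)).

Definition idsm n : smap n n :=
  exist (fun g : Rn n -> Rn n => smooth g) (fun v : Rn n => v) (fun j => polyf_smooth (polyf_coord j)).

Lemma cr_map_ext (B : CRing) n m (f g : smap n m) (x : B n) :
  (forall v, sval f v = sval g v) -> cr_map f x = cr_map g x.
Proof.
move=> H; rewrite (@cr_map_comp B n n m (idsm n) g f H x).
by rewrite (@cr_map_id B n (idsm n) (fun v => erefl)).
Qed.

Definition tupm n m (hs : 'I_m -> smap n 1) : smap n m.
Proof.
refine (exist _ (fun v => \row_j (sval (hs j) v 0 0)) _).
move=> j.
have -> : (fun x => (\row_j0 (sval (hs j0) x 0 0) : Rn m) 0 j : RR^o)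
   = (fun x => sval (hs j) x 0 ord0 : RR^o).
  by apply/funext => x; rewrite mxE.
exact: (proj2_sig (hs j) ord0).
Defined.

Lemma tup_map (B : CRing) n m (hs : 'I_m -> smap n 1) (x : B n) :
  cr_tup (fun i => cr_map (hs i) x) = cr_map (tupm hs) x.
Proof.
rewrite -[RHS]cr_projK; congr cr_tup; apply/funext => i.
apply: cr_map_comp => v /=.
by apply/rowP => k; rewrite !mxE (ord1 k).
Qed.

Definition peval (B : CRing) n (a : 'I_n -> B 1) (p : pexp n) : B 1 :=
  cr_op (psm p) a.

Fixpoint subst n m (qs : 'I_m -> pexp n) (p : pexp m) : pexp n :=
  match p with
  | PC c => PC n c
  | PV i => qs i
  | PAdd p q => PAdd (subst qs p) (subst qs q)
  | PMul p q => PMul (subst qs p) (subst qs q)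
  end.

Lemma pden_subst n m (qs : 'I_m -> pexp n) p v :
  pden (subst qs p) v = pden p (\row_j pden (qs j) v).
Proof. by elim: p => //= [i|p -> q ->|p -> q ->]; rewrite ?mxE. Qed.

Lemma peval_subst (B : CRing) n m (a : 'I_n -> B 1) (qs : 'I_m -> pexp n) p :
  peval (fun i => peval a (qs i)) p = peval a (subst qs p).
Proof.
rewrite /peval /cr_op (tup_map (fun i => psm (qs i))).
symmetry; apply: cr_map_comp => v /=.
apply/rowP => k; rewrite !mxE pden_subst; congr pden.
by apply/rowP => j; rewrite !mxE.
Qed.

Lemma peval_var (B : CRing) n (a : 'I_n -> B 1) i : peval a (PV i) = a i.
Proof. by rewrite /peval /cr_op -(cr_tupK a i); apply: cr_map_ext. Qed.

Lemma peval_ext (B : CRing) n (a : 'I_n -> B 1) p q :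
  (forall v, pden p v = pden q v) -> peval a p = peval a q.
Proof. by move=> H; apply: cr_map_ext => v /=; apply/rowP => k; rewrite !mxE H. Qed.



Definition cr_opp (B : CRing) (x : B 1%N) : B 1%N :=
  peval (fun _ : 'I_1 => x) (PMul (@PC 1 (-1)) (PV ord0)).

Lemma add_peval (B : CRing) n (a : 'I_n -> B 1%N) p q :
  cr_add (peval a p) (peval a q) = peval a (PAdd p q).
Proof.
have -> : cr_add (peval a p) (peval a q) =
  peval (fun i => peval a (pair2 p q i)) (PAdd (PV i0_2) (PV i1_2)).
  rewrite /cr_add /peval /cr_op; congr cr_map.
    by apply: eq_sig_hprop => // *; apply: Prop_irrelevance.
  by congr cr_tup; apply/funext => i; rewrite /pair2; case: ifP.
by rewrite peval_subst.
Qed.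

Lemma mul_peval (B : CRing) n (a : 'I_n -> B 1%N) p q :
  cr_mul (peval a p) (peval a q) = peval a (PMul p q).
Proof.
have -> : cr_mul (peval a p) (peval a q) =
  peval (fun i => peval a (pair2 p q i)) (PMul (PV i0_2) (PV i1_2)).
  rewrite /cr_mul /peval /cr_op; congr cr_map.
    by apply: eq_sig_hprop => // *; apply: Prop_irrelevance.
  by congr cr_tup; apply/funext => i; rewrite /pair2; case: ifP.
by rewrite peval_subst.
Qed.

Lemma opp_peval (B : CRing) n (a : 'I_n -> B 1%N) p :
  cr_opp (peval a p) = peval a (PMul (@PC n (-1)) p).
Proof. by rewrite /cr_opp (peval_subst a (fun _ => p)). Qed.

Lemma cst_peval (B : CRing) n (a : 'I_n -> B 1%N) c :
  cr_op (cstmap 0 c) (@no_ord0 (B 1%N)) = peval a (@PC n c).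
Proof.
have -> : cr_op (cstmap 0 c) (@no_ord0 (B 1%N)) =
   peval (fun i => peval a (@no_ord0 (pexp n) i)) (@PC 0 c).
  rewrite /peval /cr_op; congr cr_map.
    by apply: eq_sig_hprop => // *; apply: Prop_irrelevance.
  by congr cr_tup; apply/funext => -[].
by rewrite peval_subst.
Qed.

Lemma zero_peval (B : CRing) n (a : 'I_n -> B 1%N) : cr_zero B = peval a (@PC n 0).
Proof. exact: cst_peval. Qed.
Lemma one_peval (B : CRing) n (a : 'I_n -> B 1%N) : cr_one B = peval a (@PC n 1).
Proof. exact: cst_peval. Qed.

Definition a3 (T : Type) (x y z : T) : 'I_3 -> T :=
  fun i => if val i == 0%N then x else if val i == 1%N then y else z.
Definition o0 : 'I_3 := @Ordinal 3 0 isT.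
Definition o1 : 'I_3 := @Ordinal 3 1 isT.
Definition o2 : 'I_3 := @Ordinal 3 2 isT.

Ltac reify3 x y z :=
  let a := fresh "a" in
  let ex := fresh "ex" in let ey := fresh "ey" in let ez := fresh "ez" in
  pose a := a3 x y z;
  have ex : x = peval a (PV o0) := esym (peval_var a o0);
  have ey : y = peval a (PV o1) := esym (peval_var a o1);
  have ez : z = peval a (PV o2) := esym (peval_var a o2);
  rewrite ?(@zero_peval _ _ a) ?(@one_peval _ _ a);
  rewrite ?ex ?ey ?ez; clear ex ey ez;
  rewrite ?add_peval ?mul_peval ?opp_peval ?add_peval ?mul_peval ?opp_peval
          ?add_peval ?mul_peval ?opp_peval;
  apply: peval_ext => v /=.

Section R.
Variable B : CRing.
Implicit Types x y z : B 1%N.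
Lemma crA x y z : cr_add x (cr_add y z) = cr_add (cr_add x y) z.
Proof. reify3 x y z; ring. Qed.
Lemma crC x y : cr_add x y = cr_add y x.
Proof. reify3 x y x; ring. Qed.
Lemma cr0a x : cr_add (cr_zero B) x = x.
Proof. reify3 x x x; ring. Qed.
Lemma crNa x : cr_add (cr_opp x) x = cr_zero B.
Proof. reify3 x x x; ring. Qed.
Lemma crMA x y z : cr_mul x (cr_mul y z) = cr_mul (cr_mul x y) z.
Proof. reify3 x y z; ring. Qed.
Lemma crMC x y : cr_mul x y = cr_mul y x.
Proof. reify3 x y x; ring. Qed.
Lemma cr1M x : cr_mul (cr_one B) x = x.
Proof. reify3 x x x; ring. Qed.
Lemma crMDl x y z : cr_mul (cr_add x y) z = cr_add (cr_mul x z) (cr_mul y z).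
Proof. reify3 x y z; ring. Qed.
End R.



Definition crR (B : CRing) : Type := B 1%N.
HB.instance Definition _ (B : CRing) := gen_eqMixin (crR B).
HB.instance Definition _ (B : CRing) := gen_choiceMixin (crR B).
HB.instance Definition _ (B : CRing) :=
  GRing.isZmodule.Build (crR B) (@crA B) (@crC B) (@cr0a B) (@crNa B).
HB.instance Definition _ (B : CRing) :=
  GRing.Zmodule_isComPzRing.Build (crR B) (@crMA B) (@crMC B) (@cr1M B) (@crMDl B).

Section T.
Variable B : CRing.
Lemma crRadd (x y : B 1%N) : cr_add x y = (x : crR B) + y. Proof. by []. Qed.
Lemma crRmul (x y : B 1%N) : cr_mul x y = (x : crR B) * y. Proof. by []. Qed.
Lemma crRzero : cr_zero B = (0 : crR B). Proof. by []. Qed.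
Lemma crRone : cr_one B = (1 : crR B). Proof. by []. Qed.
Lemma crRopp (x : B 1%N) : cr_opp x = - (x : crR B). Proof. by []. Qed.
Lemma crRpow (x : B 1%N) k : cr_pow x k = (x : crR B) ^+ k.
Proof. elim: k => // k IH; by rewrite exprS -IH. Qed.
End T.

Lemma hom_tup (C D : CRing) (g : CHom C D) n (a : 'I_n -> C 1%N) :
  g n (cr_tup a) = cr_tup (fun i => g 1%N (a i)).
Proof.
rewrite -[LHS]cr_projK; congr cr_tup; apply/funext => i.
by rewrite -ch_nat cr_tupK.
Qed.

Lemma hom_op (C D : CRing) (g : CHom C D) n (f : smap n 1) (a : 'I_n -> C 1%N) :
  g 1%N (cr_op f a) = cr_op f (fun i => g 1%N (a i)).
Proof. by rewrite /cr_op ch_nat hom_tup. Qed.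

Definition gr (C D : CRing) (g : CHom C D) (x : crR C) : crR D := g 1%N x.
Section H.
Variables (C D : CRing) (g : CHom C D).
Lemma homD (x y : crR C) : (gr g (x + y) ) = gr g x + gr g y.
Proof.
rewrite /gr -crRadd /cr_add hom_op; congr cr_op; apply/funext => i.
by rewrite /pair2; case: ifP.
Qed.
Lemma homM (x y : crR C) : (gr g (x * y) ) = gr g x * gr g y.
Proof.
rewrite /gr -crRmul /cr_mul hom_op; congr cr_op; apply/funext => i.
by rewrite /pair2; case: ifP.
Qed.
Lemma hom0 : (gr g (0 : crR C) ) = 0.
Proof. exact: hom_zero. Qed.
Lemma hom1 : (gr g (1 : crR C) ) = 1.
Proof.
have -> : (1 : crR C) = cr_one C by [].
have -> : (1 : crR D) = cr_one D by [].
by rewrite /gr /cr_one hom_op; congr cr_op; apply/funext => -[].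
Qed.
Lemma homN (x : crR C) : (gr g (- x) ) = - gr g x.
Proof. by apply/eqP; rewrite -subr_eq0 opprK -homD addNr hom0. Qed.
Lemma homB (x y : crR C) : (gr g (x - y) ) = gr g x - gr g y.
Proof. by rewrite homD homN. Qed.
Lemma homX (x : crR C) k : (gr g (x ^+ k) ) = gr g x ^+ k.
Proof. elim: k => [|k IH]; by rewrite ?hom1 // !exprS homM IH. Qed.
End H.



Lemma unit_sub_nil (R : comPzRingType) (u c n : R) m :
  u * c = 1 -> n ^+ m = 0 -> exists c', (u - n) * c' = 1.
Proof.
move=> uc nm; exists (c * \sum_(i < m) (n * c) ^+ i).
rewrite mulrA mulrBl uc.
have := subrX1 (n * c) m; rewrite exprMn nm mul0r sub0r => /(congr1 -%R).
by rewrite opprK -mulNr opprB mulrC (mulrC n) => <-.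
Qed.

Section Main.
Variables (X A : CRing) (i1 i2 : CHom X A) (mu : CHom A X).
Hypothesis Hmu1 : hom_eq (hcomp i1 mu) (hid X).

Definition K := kernel mu.

Lemma K_ideal : is_ideal K.
Proof.
split.
- exact: hom_zero.
- move=> a b Ka Kb; rewrite /K /kernel.
  change (gr mu ((a : crR A) + b) = 0); rewrite homD.
  by have -> : gr mu a = 0 by []; have -> : gr mu b = 0 by []; rewrite addr0.
- move=> a b Kb; rewrite /K /kernel.
  change (gr mu ((a : crR A) * b) = 0); rewrite homM.
  by have -> : gr mu b = 0 by []; rewrite mulr0.
Qed.

Definition Jof (I : A 1%N -> Prop) : A 1%N -> Prop := fun a => I a /\ K a.

Lemma Jof_inf I : P_alg K I -> P_inf K (Jof I).
Proof.
move=> [[I0 ID IM] HIK]; split.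
  have [K0 KD KM] := K_ideal.
  split; first by split.
  - by move=> a b [? ?] [? ?]; split; [apply: ID|apply: KD].
  - by move=> a b [? ?]; split; [apply: IM|apply: KM].
move=> f; split.
  move=> Hf B psi kpsi; apply: Hf => a [_ Ka]; exact: kpsi.
move=> Hf B psi kpsi [c Hc].
pose psi' := hcomp mu (hcomp i1 psi).
apply: (Hf B psi').
  move=> a Ka /=; have -> : mu 1%N a = cr_zero X by [].
  by rewrite !hom_zero.
pose d : crR A := (f : crR A) - gr i1 (gr mu f).
have Kd : K d.
  rewrite /K /kernel; change (gr mu d = 0).
  rewrite /d homB; have -> : gr mu (gr i1 (gr mu f)) = gr mu f by exact: Hmu1.
  by rewrite subrr.
have [k Ik] : nilrad I d.
  apply/HIK; exists 1%N; rewrite crRpow expr1; exact: Kd.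
have Jd : Jof I (cr_pow d k.+1).
  split; first by apply: IM.
  rewrite /K /kernel; change (gr mu (cr_pow d k.+1) = 0).
  rewrite crRpow homX; have -> : gr mu d = 0 by []; by rewrite expr0n.
have nd : (gr psi d) ^+ k.+1 = 0.
  by rewrite -homX -crRpow; apply: kpsi.
have e : psi' 1%N f = (gr psi f - gr psi d : crR B).
  rewrite -homB /d opprB addrC subrK; by [].
rewrite e; change (is_unit (gr psi f - gr psi d : crR B)).
have Hc2 : (gr psi f : crR B) * (c : crR B) = 1 := Hc.
have [c' Hc'] := unit_sub_nil Hc2 nd.
by exists c'.
Qed.
End Main.



Section Colim.
Variables (Idx : Type) (le : Idx -> Idx -> Prop) (D : Idx -> Type)
  (t : forall i j, le i j -> D i -> D j).

Lemma colim_eq_equiv (x y : {i : Idx & D i}) :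
  colim_eq t x y -> forall z, colim_eq t x z <-> colim_eq t y z.
Proof.
move=> H z; split => Hz.
- apply: rst_trans Hz; exact: rst_sym.
- exact: rst_trans Hz.
Qed.

Lemma colim_in_eq x y : colim_eq t x y -> colim_in t x = colim_in t y.
Proof.
move=> H; apply: eq_sig_hprop => [?|/=]; first exact: Prop_irrelevance.
apply/funext => z; apply/propext; exact: colim_eq_equiv.
Qed.

Lemma repr_in y : colim_eq t (colim_repr (colim_in t y)) y.
Proof.
rewrite /colim_repr; case: cid => r /= Hr.
have : colim_eq t y y by exact: rst_refl.
by rewrite Hr; apply.
Qed.

Lemma repr_spec (c : colim t) : sval c = colim_eq t (colim_repr c).
Proof. by rewrite /colim_repr; case: cid. Qed.

Lemma in_repr (c : colim t) : colim_in t (colim_repr c) = c.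
Proof.
apply: eq_sig_hprop => [?|/=]; first exact: Prop_irrelevance.
by rewrite repr_spec.
Qed.

Lemma colim_eq_ind (Inv : {i : Idx & D i} -> {i : Idx & D i} -> Prop) :
  (forall x y, colim_gen t x y -> Inv x y) ->
  (forall x, Inv x x) -> (forall x y, Inv x y -> Inv y x) ->
  (forall x y z, Inv x y -> Inv y z -> Inv x z) ->
  forall x y, colim_eq t x y -> Inv x y.
Proof.
move=> Hg Hr Hs Ht x y; elim => //; eauto.
Qed.
End Colim.

Lemma colim_map_eq (I1 I2 : Type) (le1 : I1 -> I1 -> Prop) (le2 : I2 -> I2 -> Prop)
  (D1 : I1 -> Type) (D2 : I2 -> Type)
  (t1 : forall i j, le1 i j -> D1 i -> D1 j) (t2 : forall i j, le2 i j -> D2 i -> D2 j)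
  (F : {i : I1 & D1 i} -> {i : I2 & D2 i}) :
  (forall x y, colim_gen t1 x y -> colim_gen t2 (F x) (F y)) ->
  forall x y, colim_eq t1 x y -> colim_eq t2 (F x) (F y).
Proof.
move=> H; apply: colim_eq_ind.
- by move=> x y /H; apply: rst_step.
- move=> x; exact: rst_refl.
- move=> x y; exact: rst_sym.
- move=> x y z; exact: rst_trans.
Qed.

Section N.
Variables (A C : CRing) (P : (A 1%N -> Prop) -> Prop).

Lemma qhom_eq (I : A 1%N -> Prop) (phi psi : QHom C I) : sval phi = sval psi -> phi = psi.
Proof. by move=> H; apply: eq_sig_hprop => // ?; exact: Prop_irrelevance. Qed.

Lemma ceq_sval (x y : {I : Idx P & QHom C (sval I)}) :
  colim_eq (@restr A C P) x y -> sval (projT2 x) = sval (projT2 y).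
Proof.
move: x y; apply: (@colim_eq_ind _ _ _ _
   (fun x y : {I : Idx P & QHom C (sval I)} => sval (projT2 x) = sval (projT2 y))).
- by move=> [i u] [j w] [h /= ->].
- by [].
- by move=> ? ? ->.
- by move=> ? ? ? -> ->.
Qed.
End N.




Section E.
Variables (X A : CRing) (i1 : CHom X A) (mu : CHom A X).
Hypothesis Hmu1 : hom_eq (hcomp i1 mu) (hid X).

Definition FIdx (I : Idx (P_alg (kernel mu))) : Idx (P_inf (kernel mu)) :=
  exist _ (Jof mu (sval I)) (Jof_inf Hmu1 (proj2_sig I)).

Definition etaF (C : CRing) (y : {I : Idx (P_alg (kernel mu)) & QHom C (sval I)}) :
  {J : Idx (P_inf (kernel mu)) & QHom C (sval J)} :=
  existT _ (FIdx (projT1 y))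
    (exist (fun psi => kills psi (sval (FIdx (projT1 y)))) (sval (projT2 y))
       (fun a Ja => proj2_sig (projT2 y) a (proj1 Ja))).

Definition eta (C : CRing) (x : N_alg (kernel mu) C) : N_inf (kernel mu) C :=
  colim_in (@restr A C _) (etaF (colim_repr x)).

Definition pc (P : (A 1%N -> Prop) -> Prop) (C D : CRing) (g : CHom C D)
  (y : {I : Idx P & QHom C (sval I)}) : {I : Idx P & QHom D (sval I)} :=
  existT _ (projT1 y) (postcomp g (projT2 y)).

Lemma etaF_gen C x y : colim_gen (@restr A C _) x y ->
  colim_gen (@restr A C _) (etaF x) (etaF y).
Proof.
case: x y => [I u] [J w] [/= h ->].
have h' : idx_le (FIdx I) (FIdx J).
  by move=> a [Ja Ka]; split; [exact: h|].
exists h'; exact: qhom_eq.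
Qed.

Lemma pc_gen P C D (g : CHom C D) x y : colim_gen (@restr A C P) x y ->
  colim_gen (@restr A D P) (pc g x) (pc g y).
Proof.
case: x y => [I u] [J w] [/= h ->].
exists h; exact: qhom_eq.
Qed.
End E.



Theorem proposition3p12 (X A : CRing) (i1 i2 : CHom X A)
  (Hcop : is_coproduct i1 i2) (mu : CHom A X)
  (Hmu1 : hom_eq (hcomp i1 mu) (hid X)) (Hmu2 : hom_eq (hcomp i2 mu) (hid X)) :
  exists eta : forall C : CRing, N_alg (kernel mu) C -> N_inf (kernel mu) C,
    (forall (C D : CRing) (g : CHom C D) (x : N_alg (kernel mu) C),
        eta D (Ncolim_map g x) = Ncolim_map g (eta C x)) /\
    (forall (C : CRing) (x : N_alg (kernel mu) C),
        Ncolim_can i1 i2 (eta C x) = Ncolim_can i1 i2 x).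
Proof.
exists (eta Hmu1); split.
- move=> C D g x; rewrite /eta /Ncolim_map /=.
  apply: colim_in_eq.
  set r := colim_repr x.
  apply: rst_trans.
    apply: (colim_map_eq (@etaF_gen _ _ _ _ Hmu1 D)).
    exact: repr_in.
  have -> : etaF Hmu1 (existT _ (projT1 r) (postcomp g (projT2 r))) =
            pc g (etaF Hmu1 r).
    by rewrite /pc /=; congr existT; apply: qhom_eq.
  apply: (colim_map_eq (@pc_gen _ _ _ _ g)).
  apply: rst_sym; exact: repr_in.
- move=> C x; rewrite /Ncolim_can /eta /=.
  by rewrite (ceq_sval (repr_in _ _)).
Qed.
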